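(* Let $X_c$ be a Banach space, $A_c\in\mathcal L(X_c,X_c)$ invertible, and let $L_g\ge0$, $0\le L_c<1$, with $L_r,L_t,L_{-1}$ defined below, and assume $L_r<\|A_c^{-1}\|^{-1}$. Let $r,\tilde r\in C^2_b(X_c,X_c)$ with $\|Dr\|_0\le L_r$ and $\|D\tilde r\|_0\le L_r$. Let $X,Y$ be Banach spaces, $h\in C^2_b(Y,X)$ and $f_1,f_2\in C^2_b(X_c,Y)$. Then: (i) $\|h\circ f_1\circ(A_c+r)^{-1}-h\circ f_2\circ(A_c+\tilde r)^{-1}\|_0\le\|Dh\|_0\big(\|f_1-f_2\|_0+L_{-1}\|Df_2\|_0\|r-\tilde r\|_0\big)$. (ii) If moreover $\|D^2\tilde r\|_0\le\delta$ for some $\delta>0$, then $\|D[h\circ f_1\circ(A_c+r)^{-1}]-D[h\circ f_2\circ(A_c+\tilde r)^{-1}]\|_0\le L_{-1}\big(\|Dh\|_0+\|D^2h\|_0\|Df_2\|_0\big)\|f_1-f_2\|_1+L_{-1}^2\big(\|D^2h\|_0\|Df_2\|_0^2+\|Dh\|_0\|D^2f_2\|_0\big)\|r-\tilde r\|_1+L_{-1}^2\|Dh\|_0\|Df_1\|_0(1+L_{-1}\delta)\|r-\tilde r\|_1$.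
   Context: $\mathcal L(Y,Z)$ denotes bounded linear operators with operator norm. $C^k_b(Y,Z)$ is the Banach space of $C^k$ maps $f:Y\to Z$ with $\|f\|_k:=\max_{0\le j\le k}\sup_y\|D^jf(y)\|<\infty$. Constants: $L_r:=\frac{L_g+L_c(2\|A_c\|+L_g)}{1-L_c}$, $L_t:=\frac{\|A_c^{-1}\|^2L_r}{1-\|A_c^{-1}\|L_r}$, $L_{-1}:=\|A_c^{-1}\|+L_t$. (Under these hypotheses $A_c+r$ and $A_c+\tilde r$ are global diffeomorphisms of $X_c$.) *)

(* Defs.v *)
From HB Require Import structures.
From mathcomp Require Import all_boot all_order all_algebra.
From mathcomp Require Import all_classical all_reals all_analysis.
Set Implicit Arguments. Unset Strict Implicit. Unset Printing Implicit Defensive.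
Import Order.TTheory GRing.Theory Num.Theory.
Import numFieldNormedType.Exports.
Local Open Scope classical_set_scope.
Local Open Scope ring_scope.

Section Defs.
Context {R : realType}.

Definition supn {T : Type} {V : normedModType R} (f : T -> V) : R :=
  sup (range (fun x => `|f x|)).

Definition opn {U V : normedModType R} (L : U -> V) : R :=
  sup [set `|L u| | u in [set u : U | `|u| <= 1]].

Definition opn2 {U V : normedModType R} (B : U -> U -> V) : R :=
  sup [set `|B hu.1 hu.2| | hu in [set hu : U * U | `|hu.1| <= 1 /\ `|hu.2| <= 1]].

Definition D1 {U V : normedModType R} (f : U -> V) (x : U) : U -> V :=
  fun u => 'd f x u.

Definition D2 {U V : normedModType R} (f : U -> V) (x : U) : U -> U -> V :=
  fun h u => 'd (fun y => 'd f y u) x h.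

Definition nD {U V : normedModType R} (f : U -> V) : R :=
  sup (range (fun x => opn (D1 f x))).
Definition nD2 {U V : normedModType R} (f : U -> V) : R :=
  sup (range (fun x => opn2 (D2 f x))).

Definition n1 {U V : normedModType R} (f : U -> V) : R :=
  Num.max (supn f) (nD f).

(* f is in C^2_b(U,V): twice (Frechet) continuously differentiable with
   f, Df, D^2 f bounded *)
Definition C2b {U V : normedModType R} (f : U -> V) : Prop :=
  [/\ (forall x, differentiable f x),
      (forall x (e : R), 0 < e ->
         \forall y \near x, opn (fun u => D1 f y u - D1 f x u) <= e),
      (forall x, exists B : U -> U -> V,
         [/\ (forall a k1 k2 u, B (a *: k1 + k2) u = a *: B k1 u + B k2 u),
             (forall a k u1 u2, B k (a *: u1 + u2) = a *: B k u1 + B k u2),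
             (exists M : R, forall k u, `|B k u| <= M * `|k| * `|u|) &
             (forall e : R, 0 < e -> \forall k \near (0 : U),
                opn (fun u => D1 f (x + k) u - D1 f x u - B k u) <= e * `|k|)]),
      (forall x (e : R), 0 < e ->
         \forall y \near x, opn2 (fun h u => D2 f y h u - D2 f x h u) <= e) &
      [/\ has_ubound (range (fun x => `|f x|)),
          has_ubound (range (fun x => opn (D1 f x))) &
          has_ubound (range (fun x => opn2 (D2 f x)))]].

End Defs.

(* Main.v *)
Require Import Defs.
From HB Require Import structures.
From mathcomp Require Import all_boot all_order all_algebra.
From mathcomp Require Import all_classical all_reals all_analysis.
From mathcomp Require Import ring lra.
Import Order.TTheory GRing.Theory Num.Theory.
Import numFieldNormedType.Exports.
Local Open Scope classical_set_scope.
Local Open Scope ring_scope.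

Section mk.
Context {R : realType} {U V : normedModType R} (f : U -> V) (H : linear f).
Definition linf := f.
HB.instance Definition _ := GRing.isLinear.Build R U V *:%R linf H.
Definition mklin : {linear U -> V} := linf.
End mk.

Section Gen.
Context {R : realType}.

Lemma sup_ge0 (E : set R) : E !=set0 -> (forall x, E x -> 0 <= x) -> 0 <= sup E.
Proof.
move=> [x Ex] H; have [ub|nub] := pselect (has_ubound E).
- apply: le_trans (H x Ex) _; apply: sup_upper_bound => //; by split => //; exists x.
- by rewrite sup_out // => -[].
Qed.

Lemma le_sup_ub (E : set R) x : has_ubound E -> E x -> x <= sup E.
Proof. by move=> ub Ex; apply: sup_upper_bound => //; split => //; exists x. Qed.
Arguments le_sup_ub {E x}.

Lemma sup_le (E : set R) M : E !=set0 -> (forall x, E x -> x <= M) -> sup E <= M.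
Proof. by move=> ne H; apply: ge_sup => // x; exact: H. Qed.

Definition bnd {U V : normedModType R} (L : U -> V) (K : R) :=
  forall u, `|L u| <= K * `|u|.
Definition bnd2 {U V : normedModType R} (B : U -> U -> V) (K : R) :=
  forall h u, `|B h u| <= K * `|h| * `|u|.

Lemma opn_ge0 {U V : normedModType R} (L : U -> V) : 0 <= opn L.
Proof.
apply: sup_ge0; first by exists `|L 0|, 0 => //=; rewrite normr0.
by move=> _ [u _ <-].
Qed.

Lemma opn_le {U V : normedModType R} (L : U -> V) K :
  0 <= K -> bnd L K -> opn L <= K.
Proof.
move=> K0 HL; apply: sup_le; first by exists `|L 0|, 0 => //=; rewrite normr0.
move=> _ [u /= u1 <-]; apply: le_trans (HL u) _.
by rewrite -[X in _ <= X]mulr1; exact: ler_wpM2l.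
Qed.

Lemma opn_bnd {U V : normedModType R} (L : U -> V) :
  (forall a u, L (a *: u) = a *: L u) -> (exists K, bnd L K) -> bnd L (opn L).
Proof.
move=> Lz [K HK] u.
have ub : has_ubound [set `|L u| | u in [set u : U | `|u| <= 1]].
  exists `|K| => _ [v /= v1 <-]; apply: le_trans (HK v) _.
  apply: le_trans (ler_norm _) _; rewrite normrM normr_id.
  by rewrite -[X in _ <= X]mulr1; apply: ler_wpM2l.
have [->|u0] := eqVneq u 0.
  have -> : L 0 = 0 by rewrite -(scale0r (0:U)) Lz scale0r.
  by rewrite !normr0 mulr0.
have nu : 0 < `|u| by rewrite normr_gt0.
have hv : `|(Num.norm u)^-1 *: u| <= 1 by rewrite normrZ normfV normr_id mulVf ?gt_eqF.
have H := le_sup_ub ub (ex_intro2 _ _ (`|u|^-1 *: u) hv erefl).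
have -> : L u = `|u| *: L (`|u|^-1 *: u).
  by rewrite -Lz scalerA mulfV ?gt_eqF // scale1r.
by rewrite normrZ normr_id mulrC; apply: ler_wpM2r.
Qed.

Lemma opn2_ge0 {U V : normedModType R} (B : U -> U -> V) : 0 <= opn2 B.
Proof.
apply: sup_ge0; first by exists `|B 0 0|, (0, 0) => //=; rewrite normr0.
by move=> _ [u _ <-].
Qed.

Lemma opn2_le {U V : normedModType R} (B : U -> U -> V) K :
  0 <= K -> bnd2 B K -> opn2 B <= K.
Proof.
move=> K0 HB; apply: sup_le; first by exists `|B 0 0|, (0, 0) => //=; rewrite normr0.
move=> _ [[h u] /= [h1 u1] <-]; apply: le_trans (HB h u) _.
rewrite -[X in _ <= X]mulr1 -mulrA; apply: ler_wpM2l => //.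
by rewrite -[X in _ <= X]mulr1; apply: ler_pM.
Qed.

Lemma opn2_bnd {U V : normedModType R} (B : U -> U -> V) :
  (forall a h u, B (a *: h) u = a *: B h u) ->
  (forall a h u, B h (a *: u) = a *: B h u) ->
  (exists K, bnd2 B K) -> bnd2 B (opn2 B).
Proof.
move=> Bl Br [K HK] h u.
have ub : has_ubound [set `|B hu.1 hu.2| | hu in
              [set hu : U * U | `|hu.1| <= 1 /\ `|hu.2| <= 1]].
  exists `|K| => _ [[v w] /= [v1 w1] <-]; apply: le_trans (HK v w) _.
  apply: le_trans (ler_norm _) _; rewrite !normrM !normr_id -mulrA.
  rewrite -[X in _ <= X]mulr1; apply: ler_wpM2l => //.
  by rewrite -[X in _ <= X]mulr1; apply: ler_pM.
have [->|h0] := eqVneq h 0.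
  have -> : B 0 u = 0 by rewrite -(scale0r (0:U)) Bl scale0r.
  by rewrite !normr0 mulr0 mul0r.
have [->|u0] := eqVneq u 0.
  have -> : B h 0 = 0 by rewrite -(scale0r (0:U)) Br scale0r.
  by rewrite !normr0 mulr0.
have nh : 0 < `|h| by rewrite normr_gt0.
have nu : 0 < `|u| by rewrite normr_gt0.
have hv : `|(Num.norm h)^-1 *: h| <= 1 by rewrite normrZ normfV normr_id mulVf ?gt_eqF.
have hw : `|(Num.norm u)^-1 *: u| <= 1 by rewrite normrZ normfV normr_id mulVf ?gt_eqF.
have H := le_sup_ub ub (ex_intro2 _ _ (`|h|^-1 *: h, `|u|^-1 *: u) (conj hv hw) erefl).
have -> : B h u = (`|h| * `|u|) *: B (`|h|^-1 *: h) (`|u|^-1 *: u).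
  by rewrite Bl Br !scalerA mulrACA mulfV ?gt_eqF // mulfV ?gt_eqF // mulr1 scale1r.
rewrite normrZ normrM !normr_id mulrC -mulrA; apply: ler_wpM2r => //.
Qed.

Lemma d_bndK {U V : normedModType R} (f : U -> V) x :
  differentiable f x -> exists K, bnd ('d f x) K.
Proof. by move=> /diff_continuous /linear_lipschitz [k _ Hk]; exists k. Qed.

Lemma d_opn {U V : normedModType R} (f : U -> V) x :
  differentiable f x -> bnd ('d f x) (opn (D1 f x)).
Proof.
move=> df; apply: (@opn_bnd _ _ (D1 f x)); first by move=> a u; rewrite /D1 linearZ.
exact: d_bndK.
Qed.

Lemma opn_nD {U V : normedModType R} (f : U -> V) x :
  has_ubound (range (fun x => opn (D1 f x))) -> opn (D1 f x) <= nD f.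
Proof. by move=> ub; apply: le_sup_ub => //; exists x. Qed.

Lemma nD_ge0 {U V : normedModType R} (f : U -> V) : 0 <= nD f.
Proof. by apply: sup_ge0; [exists (opn (D1 f 0)), 0 | move=> _ [y _ <-]; apply: opn_ge0]. Qed.

Lemma nD2_ge0 {U V : normedModType R} (f : U -> V) : 0 <= nD2 f.
Proof. by apply: sup_ge0; [exists (opn2 (D2 f 0)), 0 | move=> _ [y _ <-]; apply: opn2_ge0]. Qed.

Lemma supn_ge0 {T : Type} {V : normedModType R} (f : T -> V) (t : T) : 0 <= supn f.
Proof. by apply: sup_ge0; [exists `|f t|, t | move=> _ [y _ <-]]. Qed.

Lemma supn_ub {T : Type} {V : normedModType R} (f : T -> V) t :
  has_ubound (range (fun x => `|f x|)) -> `|f t| <= supn f.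
Proof. by move=> ub; apply: le_sup_ub => //; exists t. Qed.

Lemma d_nD {U V : normedModType R} (f : U -> V) x :
  differentiable f x -> has_ubound (range (fun x => opn (D1 f x))) ->
  bnd ('d f x) (nD f).
Proof.
move=> df ub u; have := @d_opn _ _ f x df u; move/le_trans; apply.
by apply: ler_wpM2r => //; apply: opn_nD.
Qed.

Lemma diff_eps {U V : normedModType R} (f : U -> V) x : differentiable f x ->
  forall e, 0 < e -> \forall h \near 0, `|f (x + h) - f x - 'd f x h| <= e * `|h|.
Proof.
move=> df e e0; have /eqaddoP H := diff_locally df.
move: (H e e0); apply: filterS => h /=.
by rewrite !fctE /= [h + x]addrC opprD addrA.
Qed.

Lemma diff_of {U V : normedModType R} (f : U -> V) (L : {linear U -> V}) x :
  continuous L ->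
  (forall e, 0 < e -> \forall h \near 0, `|f (x + h) - f x - L h| <= e * `|h|) ->
  differentiable f x /\ 'd f x = L :> (U -> V).
Proof.
move=> cL H.
have dxf : f \o shift x = cst (f x) + L +o_ 0 id.
  apply/(@eqaddoP R) => e e0; move: (H e e0); apply: filterS => h /=.
  by rewrite !fctE /= [h + x]addrC opprD addrA.
have dL := diff_unique cL dxf.
split => //; apply/diff_locallyxP; rewrite dL; split => // h.
rewrite littleoE; first by rewrite /= [RHS]addrC subrK.
move=> e e0; move: (H e e0); apply: filterS => k /=.
by rewrite [k + x]addrC opprD addrA.
Qed.

Lemma mvi_R {W : normedModType R} (phi : R -> W) (k : R) :
  (forall t, 0 <= t <= 1 -> exists2 d, 0 < d &
     forall s, `|s - t| < d -> `|phi s - phi t| <= k * `|s - t|) ->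
  `|phi 1 - phi 0| <= k.
Proof.
move=> H.
pose A := [set t : R | (0 <= t <= 1) /\
             forall s, 0 <= s <= t -> `|phi s - phi 0| <= k * s].
have A0 : A 0.
  split; first by rewrite lexx ler01.
  move=> s /andP[s0 s0']; have -> : s = 0 by apply/le_anti; rewrite s0 s0'.
  by rewrite subrr normr0 mulr0.
have ubA : has_ubound A by exists 1 => t [/andP[_ ?] _].
have hsA : has_sup A by split; [exists 0|].
set m := sup A.
have m0 : 0 <= m := le_sup_ub ubA A0.
have m1 : m <= 1 by apply: sup_le; [exists 0|move=> t [/andP[_ ?] _]].
have m01 : 0 <= m <= 1 by rewrite m0 m1.
have below : forall s, 0 <= s < m -> `|phi s - phi 0| <= k * s.
  move=> s /andP[s0 sm].
  have hms : 0 < m - s by rewrite subr_gt0.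
  have [t [_ At] lt] := sup_adherent hms hsA.
  apply: At; rewrite s0 /=; rewrite -/m in lt; lra.
have Am : A m.
  split; first by rewrite m0 m1.
  move=> s /andP[s0 sm]; case: (ltP s m) => [lt|ge]; first by apply: below; rewrite s0 lt.
  have -> : s = m by apply/le_anti; rewrite sm ge.
  have [d d0 Hd] := H m m01.
  case: (eqVneq m 0) => [->|mn0]; first by rewrite subrr normr0 mulr0.
  have mp : 0 < m by rewrite lt_def mn0 m0.
  set mu := Num.min d m.
  have mu0 : 0 < mu by rewrite lt_min d0 mp.
  have mud : mu <= d by rewrite ge_min lexx.
  have mum : mu <= m by rewrite ge_min lexx orbT.
  set s' := m - mu / 2.
  have hs' : `|s' - m| = mu / 2.
    by rewrite (_ : s' - m = - (mu / 2)) ?normrN ?gtr0_norm ?divr_gt0 //; rewrite /s'; lra.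
  have b1 := below s' (_ : 0 <= s' < m).
  have b2 := Hd s' (_ : `|s' - m| < d).
  have e1 : 0 <= s' < m by apply/andP; split; rewrite /s'; lra.
  have e2 : `|s' - m| < d by rewrite hs'; lra.
  have {}b1 := b1 e1; have {}b2 := b2 e2.
  rewrite hs' in b2.
  apply: le_trans (ler_distD (phi s') _ _) _.
  rewrite distrC; apply: le_trans (lerD b2 b1) _.
  have -> : mu / 2 = m - s' by rewrite /s'; lra.
  by rewrite -mulrDr subrK.
have m1' : m = 1.
  apply/eqP; rewrite eq_le m1 /= leNgt; apply/negP => lt1.
  have [d d0 Hd] := H m m01.
  set mu := Num.min d (1 - m).
  have mu0 : 0 < mu by rewrite lt_min d0 subr_gt0 lt1.
  have mud : mu <= d by rewrite ge_min lexx.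
  have mum : mu <= 1 - m by rewrite ge_min lexx orbT.
  have At : A (m + mu / 2).
    split; first by apply/andP; split; lra.
    move=> s /andP[s0 st]; case: (leP s m) => [sm|ms]; first by apply: Am.2; rewrite s0 sm.
    have hsm : `|s - m| = s - m by rewrite gtr0_norm // subr_gt0.
    have e2 : `|s - m| < d by rewrite hsm; lra.
    have b2 := Hd s e2.
    apply: le_trans (ler_distD (phi m) _ _) _.
    have e3 : 0 <= m <= m by rewrite m0 lexx.
    apply: le_trans (lerD b2 (Am.2 m e3)) _.
    by rewrite hsm -mulrDr subrK.
  have := le_sup_ub ubA At; rewrite -/m; lra.
have := Am.2 1; rewrite mulr1; apply.
by rewrite m1'; apply/andP; split; [exact: ler01|exact: lexx].
Qed.

Lemma mvi_loc {U V : normedModType R} (f : U -> V) c : 0 <= c ->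
  (forall x e, 0 < e -> exists2 d, 0 < d &
     forall h, `|h| < d -> `|f (x + h) - f x| <= (c + e) * `|h|) ->
  forall a b, `|f b - f a| <= c * `|b - a|.
Proof.
move=> c0 H a b.
have [->|ba] := eqVneq b a; first by rewrite !subrr !normr0 mulr0.
have n0 : 0 < `|b - a| by rewrite normr_gt0 subr_eq0.
apply/ler_addgt0Pr => e e0.
pose phi t := f (a + t *: (b - a)).
have -> : f b = phi 1 by rewrite /phi scale1r addrC subrK.
have -> : f a = phi 0 by rewrite /phi scale0r addr0.
apply: (@mvi_R _ phi (c * `|b - a| + e)) => t _.
have [d d0 Hd] := H (a + t *: (b - a)) (e / `|b - a|) (divr_gt0 e0 n0).
exists (d / `|b - a|); first by rewrite divr_gt0.
move=> s hs.
have -> : phi s = f ((a + t *: (b - a)) + (s - t) *: (b - a)).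
  by rewrite /phi scalerBl [s *: (b - a) - _]addrC addrA addrK.
apply: le_trans (Hd _ _) _.
  by rewrite normrZ -ltr_pdivlMr.
rewrite normrZ le_eqVlt; apply/orP; left; apply/eqP; field.
by rewrite gt_eqF.
Qed.

Lemma mvi {U V : normedModType R} (f : U -> V) M : 0 <= M ->
  (forall x, differentiable f x) -> (forall x, bnd ('d f x) M) ->
  forall a b, `|f b - f a| <= M * `|b - a|.
Proof.
move=> M0 df bd; apply: mvi_loc => // x e e0.
have /nbhs_norm0P [d d0 Hd] := @diff_eps _ _ f x (df x) e e0.
exists d => // h hh; have := Hd h hh => /= H1.
rewrite -[f (x + h) - f x](subrK ('d f x h)).
apply: le_trans (ler_normD _ _) _; rewrite mulrDl addrC.
by apply: lerD => //; apply: bd.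
Qed.

End Gen.
Arguments le_sup_ub {R E x}.


Section C2.
Context {R : realType}.

Lemma lin_bnd_cont {U V : normedModType R} (L : {linear U -> V}) K :
  bnd L K -> continuous L.
Proof.
move=> HK; apply: bounded_linear_continuous; apply/linear_boundedP.
near=> r => x; apply: le_trans (HK x) _; apply: ler_wpM2r; first done.
by near: r; apply: nbhs_pinfty_ge; rewrite num_real.
Unshelve. all: by end_near. Qed.

Lemma linZ {U V : normedModType R} (F : U -> V) : linear F ->
  forall a u, F (a *: u) = a *: F u.
Proof. by move=> H a u; rewrite -[LHS]/(mklin F H (a *: u)) linearZ. Qed.

Lemma linB {U V : normedModType R} (F : U -> V) : linear F ->
  forall u v, F (u - v) = F u - F v.
Proof. by move=> H u v; rewrite -[LHS]/(mklin F H (u - v)) linearB. Qed.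

Lemma ler_normBB {V : normedModType R} (a b c : V) :
  `|a - b - c| <= `|a| + `|b| + `|c|.
Proof.
apply: le_trans (ler_normB _ _) _; apply: lerD => //.
exact: ler_normB.
Qed.

Section C2f.
Context {U V : normedModType R} (f : U -> V) (hf : C2b f).

Lemma C2b_diff x : differentiable f x.
Proof. by case: hf. Qed.

Lemma C2b_ub0 : has_ubound (range (fun x => `|f x|)).
Proof. by case: hf => _ _ _ _ []. Qed.
Lemma C2b_ub1 : has_ubound (range (fun x => opn (D1 f x))).
Proof. by case: hf => _ _ _ _ []. Qed.
Lemma C2b_ub2 : has_ubound (range (fun x => opn2 (D2 f x))).
Proof. by case: hf => _ _ _ _ []. Qed.

Lemma C2b_D x : bnd ('d f x) (nD f).
Proof. exact: d_nD (C2b_diff x) C2b_ub1. Qed.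

Lemma C2b_lip a b : `|f b - f a| <= nD f * `|b - a|.
Proof. by apply: mvi; [exact: nD_ge0|exact: C2b_diff|exact: C2b_D]. Qed.

Lemma C2b_sup x : `|f x| <= supn f.
Proof. exact: supn_ub C2b_ub0. Qed.

Lemma C2b_D2 x : (forall w, differentiable (fun y => 'd f y w) x) /\
   bnd2 (D2 f x) (nD2 f).
Proof.
case: hf => df _ H3 _ [_ ub1 ub2].
have [B [Bl Br [M HM] Bo]] := H3 x.
have B0r k : B k 0 = 0.
  by have := Br (-1) k 0 0; rewrite scaler0 addr0 scaleN1r addNr.
have B0l u : B 0 u = 0.
  by have := Bl (-1) 0 0 u; rewrite scaler0 addr0 scaleN1r addNr.
have BZr a k u : B k (a *: u) = a *: B k u by rewrite -[a *: u]addr0 Br B0r addr0.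
have BZl a k u : B (a *: k) u = a *: B k u by rewrite -[a *: k]addr0 Bl B0l addr0.
have Hw : forall w, differentiable (fun y => 'd f y w) x /\
    'd (fun y => 'd f y w) x = (fun k => B k w) :> (U -> V).
  move=> w.
  have linBw : linear (fun k => B k w) by move=> a k1 k2; rewrite Bl.
  apply: (@diff_of _ _ _ _ (mklin _ linBw)).
    apply: (@lin_bnd_cont _ _ _ (M * `|w|)) => k /=.
    by rewrite /linf mulrAC; exact: HM.
  move=> e e0.
  pose e' := e / (`|w| + 1).
  have w10 : 0 < `|w| + 1 by rewrite ltr_pwDr.
  have e'0 : 0 < e' by rewrite divr_gt0.
  move: (Bo e' e'0); apply: filterS => k Hk.
  pose T := fun u => D1 f (x + k) u - D1 f x u - B k u.
  have hT : bnd T (opn T).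
    apply: opn_bnd.
      by move=> a u; rewrite /T /D1 !linearZZ BZr !scalerDr !scalerN.
    exists (opn (D1 f (x + k)) + opn (D1 f x) + M * `|k|) => u.
    apply: le_trans (ler_normBB _ _ _) _.
    rewrite !mulrDl; apply: lerD; first apply: lerD.
    - exact: (@d_opn _ _ _ f (x + k) (df _) u).
    - exact: (@d_opn _ _ _ f x (df _) u).
    - exact: HM.
  apply: le_trans (hT w) _; apply: le_trans (ler_wpM2r (normr_ge0 w) Hk) _.
  have : e' * `|w| <= e.
    rewrite /e' mulrAC ler_pdivrMr //; apply: ler_wpM2l; first exact: ltW.
    by rewrite lerDl.
  by move=> H; rewrite mulrAC; apply: ler_wpM2r.
have D2E k w : D2 f x k w = B k w.
  by rewrite /D2 (Hw w).2.
split; first by move=> w; exact: (Hw w).1.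
move=> k w; apply: le_trans (@opn2_bnd _ _ _ (D2 f x) _ _ _ k w) _.
- by move=> a k' u; rewrite !D2E BZl.
- by move=> a k' u; rewrite !D2E BZr.
- by exists M => k' u; rewrite D2E; exact: HM.
- rewrite -!mulrA; apply: ler_wpM2r; first by rewrite mulr_ge0.
  by apply: (le_sup_ub ub2); exists x.
Qed.

Lemma C2b_Dlip a b w : `|'d f b w - 'd f a w| <= nD2 f * `|b - a| * `|w|.
Proof.
rewrite mulrAC.
apply: (@mvi _ _ _ (fun y => 'd f y w)).
- by rewrite mulr_ge0 // nD2_ge0.
- by move=> y; exact: (C2b_D2 y).1 w.
- move=> y k; have := (C2b_D2 y).2 k w; rewrite /D2 mulrAC.
  done.
Qed.

End C2f.
End C2.


Lemma zmod_id (W : zmodType) (u v a b : W) : (u + a - (v + b)) - (a - b) = u - v.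
Proof. by rewrite opprD opprB !addrA subrK addrAC addrK. Qed.

Lemma zmod_id3 (W : zmodType) (a b c d e : W) :
  (a + b + c) - (a + d) = b + e + (c - d - e).
Proof.
rewrite -(addrA a b c) opprD addrACA subrr add0r.
by rewrite (addrACA b e) subrr addr0 addrA.
Qed.

Lemma linD {R : realType} {U V : normedModType R} (F : U -> V) : linear F ->
  forall u v, F (u + v) = F u + F v.
Proof. by move=> H u v; rewrite -[LHS]/(mklin F H (u + v)) linearD. Qed.

Lemma zmod_id2 (W : zmodType) (z p q : W) : (z - p) - (z - q) = q - p.
Proof. by rewrite opprB addrC addrA subrK. Qed.

Section Inv.
Context {R : realType} {Xc : completeNormedModType R}.
Variables (A : {linear Xc -> Xc}) (Ainv : Xc -> Xc) (a Lr : R) (r g : Xc -> Xc).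
Hypotheses (AK : cancel A Ainv) (KA : cancel Ainv A) (Alin : linear Ainv)
  (Ab : bnd Ainv a) (a0 : 0 <= a) (Lr0 : 0 <= Lr) (aLr : a * Lr < 1)
  (rC : C2b r) (rL : nD r <= Lr)
  (gK : cancel (fun x => A x + r x) g) (Kg : cancel g (fun x => A x + r x)).

Definition Lmf := a / (1 - a * Lr).
Local Notation Lm := Lmf.

Lemma Lm_ge0 : 0 <= Lm.
Proof. by rewrite divr_ge0 // subr_ge0 ltW. Qed.

Lemma key_alg (P Q : R) : P <= a * (Q + Lr * P) -> P <= Lm * Q.
Proof.
move=> H; have d0 : 0 < 1 - a * Lr by rewrite subr_gt0.
rewrite /Lmf mulrAC ler_pdivlMr //; nra.
Qed.

Lemma rlip p q : `|r p - r q| <= Lr * `|p - q|.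
Proof.
apply: le_trans (@C2b_lip _ _ _ r rC q p) _; apply: ler_wpM2r => //.
Qed.

Lemma Drb y u : `|'d r y u| <= Lr * `|u|.
Proof. by apply: le_trans (@C2b_D _ _ _ r rC y u) _; apply: ler_wpM2r. Qed.

Lemma g_lip x y : `|g x - g y| <= Lm * `|x - y|.
Proof.
apply: key_alg.
set p := g x; set q := g y.
have ex : x = A p + r p by rewrite /p Kg.
have ey : y = A q + r q by rewrite /q Kg.
have E : p - q = Ainv ((x - y) - (r p - r q)).
  by rewrite -[p - q]AK linearB /= ex ey zmod_id.
rewrite {1}E; apply: le_trans (Ab _) _; apply: ler_wpM2l => //.
apply: le_trans (ler_normB _ _) _; apply: lerD => //; exact: rlip.
Qed.

Section T.
Variable y0 : Xc.
Definition Tf u := A u + 'd r y0 u.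
Local Notation T := Tf.

Lemma T_lin : linear T.
Proof. by move=> c u v; rewrite /Tf !linearP /= scalerDr addrACA. Qed.

Lemma T_low u : `|u| <= Lm * `|T u|.
Proof.
apply: key_alg.
have E : u = Ainv (T u - 'd r y0 u) by rewrite /Tf addrK AK.
rewrite {1}E; apply: le_trans (Ab _) _; apply: ler_wpM2l => //.
apply: le_trans (ler_normB _ _) _; apply: lerD => //.
exact: Drb.
Qed.

Lemma T_inj u v : T u = T v -> u = v.
Proof.
move=> H; apply/eqP; rewrite -subr_eq0 -normr_eq0 eq_le normr_ge0 andbT.
by apply: le_trans (T_low (u - v)) _; rewrite (linB _ T_lin) H subrr normr0 mulr0.
Qed.

Lemma T_surj z : exists u, T u = z.
Proof.
pose F u := Ainv (z - 'd r y0 u).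
have ctr : is_contraction (totalfun_ setT F : {fun setT >-> setT}).
  exists (NngNum (mulr_ge0 a0 Lr0)); split => //= -[u v] _ /=.
  rewrite /F -(linB _ Alin) zmod_id2.
  apply: le_trans (Ab _) _; rewrite -mulrA; apply: ler_wpM2l => //.
  by rewrite -linearB distrC; exact: Drb.
have [p _ hp] := banach_fixed_point ctr closedT (ex_intro _ 0 I).
exists p; rewrite /Tf {1}hp /= /F KA subrK //.
Qed.

Lemma T_inv : exists S : Xc -> Xc, [/\ linear S, bnd S Lm,
  forall z, T (S z) = z & forall u, S (T u) = u].
Proof.
have [S HS] := choice T_surj.
have SK u : S (T u) = u by apply: T_inj; rewrite HS.
exists S; split => //.
- move=> c z w; apply: T_inj; rewrite HS.
  by rewrite T_lin !HS.
- by move=> z; apply: le_trans (T_low (S z)) _; rewrite HS.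
Qed.
End T.

Lemma g_diff x : differentiable g x /\
  [/\ bnd ('d g x) Lm,
      forall z, Tf (g x) ('d g x z) = z &
      forall u, 'd g x (Tf (g x) u) = u].
Proof.
set y0 := g x.
have [S [Slin Sb TS ST]] := T_inv y0.
have [dg dgE] : differentiable g x /\ 'd g x = (mklin S Slin) :> (Xc -> Xc).
  apply: diff_of; first exact: (@lin_bnd_cont _ _ _ _ Lm).
  move=> e e0.
  have Lm1 : 0 < Lm * Lm + 1 by rewrite ltr_pwDr // mulr_ge0 // Lm_ge0.
  have e'0 : 0 < e / (Lm * Lm + 1) by apply: divr_gt0.
  have /nbhs_norm0P [d d0 Hd] := @diff_eps _ _ _ r y0 (@C2b_diff _ _ _ r rC y0) _ e'0.
  have Lp : 0 < Lm + 1 by rewrite ltr_pwDr // Lm_ge0.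
  apply/nbhs_norm0P; exists (d / (Lm + 1)); first by apply: divr_gt0.
  move=> h /= hh.
  set k := g (x + h) - y0.
  have hk : `|k| <= Lm * `|h|.
    by apply: le_trans (g_lip _ _) _; rewrite addrC addKr.
  have kd : `|k| < d.
    apply: le_lt_trans hk _.
    apply: le_lt_trans (_ : Lm * `|h| <= (Lm + 1) * `|h|) _.
      by apply: ler_wpM2r => //; rewrite lerDl.
    by rewrite mulrC -ltr_pdivlMr.
  have := Hd k kd => /= Hr.
  set rho := r (y0 + k) - r y0 - 'd r y0 k.
  have hT : h = Tf y0 k + rho.
    have ex : x = A y0 + r y0 by rewrite /y0 Kg.
    have exh : x + h = A (y0 + k) + r (y0 + k) by rewrite /k [y0 + _]addrC subrK Kg.
    have -> : h = (x + h) - x by rewrite addrC addKr.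
    by rewrite exh ex /Tf /rho linearD /=; exact: zmod_id3.
  have -> : g (x + h) - g x - S h = - S rho.
    rewrite [in S h]hT (linD _ Slin) ST /k /y0.
    by rewrite opprD addrA subrr add0r.
  rewrite normrN; apply: le_trans (Sb _) _.
  apply: le_trans (ler_wpM2l Lm_ge0 Hr) _.
  apply: le_trans (ler_wpM2l Lm_ge0 (ler_wpM2l (ltW e'0) hk)) _.
  rewrite (_ : Lm * (e / (Lm * Lm + 1) * (Lm * `|h|)) =
             (e * `|h|) * (Lm * Lm / (Lm * Lm + 1))); last first.
    by field; rewrite gt_eqF.
  apply: ler_piMr; first by rewrite mulr_ge0 // ltW.
  by rewrite ler_pdivrMr // mul1r lerDl.
split => //; split.
- by move=> u; rewrite dgE; exact: Sb.
- by move=> z; rewrite dgE; exact: TS.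
- by move=> u; rewrite dgE; exact: ST.
Qed.

End Inv.


Lemma zmod_id4 (W : zmodType) (p q s : W) : (p - q) - (s - q) = p - s.
Proof. by rewrite opprB addrA subrK. Qed.

Section Sub.
Context {R : realType} {U V : normedModType R} (f1 f2 : U -> V)
  (h1 : C2b f1) (h2 : C2b f2).

Lemma supn_n1 : supn (f1 \- f2) <= n1 (f1 \- f2).
Proof. by rewrite /n1 le_max lexx. Qed.
Lemma nD_n1 : nD (f1 \- f2) <= n1 (f1 \- f2).
Proof. by rewrite /n1 le_max lexx orbT. Qed.

Lemma sub_ub0 : has_ubound (range (fun x => `|(f1 \- f2) x|)).
Proof.
exists (supn f1 + supn f2) => _ [y _ <-] /=.
apply: le_trans (ler_normB _ _) _.
by apply: lerD; exact: C2b_sup.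
Qed.

Lemma sub_sup y : `|f1 y - f2 y| <= supn (f1 \- f2).
Proof. exact: (supn_ub (f1 \- f2) y sub_ub0). Qed.

Lemma sub_diff y : differentiable (f1 \- f2) y.
Proof. by apply: differentiableB; exact: C2b_diff. Qed.

Lemma sub_dE y w : 'd (f1 \- f2) y w = 'd f1 y w - 'd f2 y w.
Proof.
have E : 'd (f1 \- f2) y = 'd f1 y \- 'd f2 y :> (U -> V).
  by apply: diffB; exact: C2b_diff.
by rewrite E.
Qed.

Lemma sub_ub1 : has_ubound (range (fun x => opn (D1 (f1 \- f2) x))).
Proof.
exists (nD f1 + nD f2) => _ [y _ <-] /=.
apply: opn_le; first by rewrite addr_ge0 // nD_ge0.
move=> w; rewrite /D1 sub_dE mulrDl.
apply: le_trans (ler_normB _ _) _.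
by apply: lerD; exact: C2b_D.
Qed.

Lemma sub_D y : bnd ('d (f1 \- f2) y) (n1 (f1 \- f2)).
Proof.
move=> w; apply: le_trans (d_nD (f1 \- f2) y (sub_diff y) sub_ub1 w) _.
by apply: ler_wpM2r => //; exact: nD_n1.
Qed.

End Sub.

Lemma dcomp3 {R : realType} {X1 X2 X3 X4 : normedModType R}
  (h : X3 -> X4) (f : X2 -> X3) (g : X1 -> X2) x :
  differentiable g x -> differentiable f (g x) -> differentiable h (f (g x)) ->
  forall u, 'd (h \o f \o g) x u = 'd h (f (g x)) ('d f (g x) ('d g x u)).
Proof.
move=> dg df dh u.
rewrite diff_comp //; last by apply: differentiable_comp.
by rewrite /= diff_comp.
Qed.

Section Ydiff.
Context {R : realType} {Xc : completeNormedModType R}.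
Variables (A : {linear Xc -> Xc}) (Ainv : Xc -> Xc) (a Lr : R) (r rt g1 g2 : Xc -> Xc).
Hypotheses (AK : cancel A Ainv) (Ab : bnd Ainv a) (a0 : 0 <= a) (aLr : a * Lr < 1)
  (rC : C2b r) (rtC : C2b rt) (rL : nD r <= Lr)
  (K1 : cancel g1 (fun x => A x + r x)) (K2 : cancel g2 (fun x => A x + rt x)).

Lemma ydiff x : `|g1 x - g2 x| <= Lmf a Lr * supn (r \- rt).
Proof.
set y1 := g1 x; set y2 := g2 x.
have e1 : A y1 = x - r y1 by rewrite -(K1 x) addrK.
have e2 : A y2 = x - rt y2 by rewrite -(K2 x) addrK.
have E : y1 - y2 = Ainv ((rt y2 - r y2) - (r y1 - r y2)).
  by rewrite -[y1 - y2]AK linearB /= e1 e2 zmod_id2 zmod_id4.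
have H : `|y1 - y2| <= Lmf a Lr * `|rt y2 - r y2|.
  apply: key_alg => //.
  rewrite {1}E; apply: le_trans (Ab _) _; apply: ler_wpM2l => //.
  apply: le_trans (ler_normB _ _) _; apply: lerD => //.
  apply: le_trans (C2b_lip r rC y2 y1) _; exact: ler_wpM2r.
apply: le_trans H _; apply: ler_wpM2l; first exact: Lm_ge0.
by rewrite distrC; exact: sub_sup.
Qed.
End Ydiff.


Lemma zmod_id5 (W : zmodType) (a b c : W) : (a + b) - (a + c) = b - c.
Proof. by rewrite opprD addrACA subrr add0r. Qed.

Lemma dist5 {R : realType} {V : normedModType R} (p1 p2 p3 p4 p5 p6 : V) :
  `|p1 - p6| <= `|p1 - p2| + `|p2 - p3| + `|p3 - p4| + `|p4 - p5| + `|p5 - p6|.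
Proof.
apply: le_trans (ler_distD p5 _ _) _; rewrite lerD2r.
apply: le_trans (ler_distD p4 _ _) _; rewrite lerD2r.
apply: le_trans (ler_distD p3 _ _) _; rewrite lerD2r.
exact: ler_distD.
Qed.

Lemma final_num {R : realType} (nh nh2 nf1 nf2 nf22 nF nr L dl U
    t12 t23 t34 t45 t56 dv v2 yd fd : R) :
  0 <= nh -> 0 <= nh2 -> 0 <= nf1 -> 0 <= nf2 -> 0 <= nf22 -> 0 <= nF ->
  0 <= nr -> 0 <= L -> 0 <= dl -> 0 <= U -> 0 <= dv -> 0 <= v2 -> 0 <= yd -> 0 <= fd ->
  dv <= L ^+ 2 * (1 + L * dl) * nr * U -> v2 <= L * U -> yd <= L * nr -> fd <= nF ->
  t12 <= nh * (nf1 * dv) -> t23 <= nh * (nF * v2) -> t34 <= nh2 * fd * (nf2 * v2) ->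
  t45 <= nh * (nf22 * yd * v2) -> t56 <= nh2 * (nf2 * yd) * (nf2 * v2) ->
  t12 + t23 + t34 + t45 + t56 <=
  (L * (nh + nh2 * nf2) * nF + L ^+ 2 * (nh2 * nf2 ^+ 2 + nh * nf22) * nr
   + L ^+ 2 * nh * nf1 * (1 + L * dl) * nr) * U.
Proof.
move=> ? ? ? ? ? ? ? ? ? ? ? ? ? ? hdv hv2 hyd hfd h12 h23 h34 h45 h56.
have a12 : t12 <= nh * (nf1 * (L ^+ 2 * (1 + L * dl) * nr * U)).
  by apply: le_trans h12 _; apply: ler_wpM2l => //; apply: ler_wpM2l.
have a23 : t23 <= nh * (nF * (L * U)).
  by apply: le_trans h23 _; apply: ler_wpM2l => //; apply: ler_wpM2l.
have a34 : t34 <= nh2 * nF * (nf2 * (L * U)).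
  apply: le_trans h34 _; apply: ler_pM; rewrite ?mulr_ge0 //.
    by apply: ler_wpM2l.
  by apply: ler_wpM2l.
have a45 : t45 <= nh * (nf22 * (L * nr) * (L * U)).
  apply: le_trans h45 _; apply: ler_wpM2l => //.
  apply: ler_pM; rewrite ?mulr_ge0 //.
  by apply: ler_wpM2l.
have a56 : t56 <= nh2 * (nf2 * (L * nr)) * (nf2 * (L * U)).
  apply: le_trans h56 _; apply: ler_pM; rewrite ?mulr_ge0 //.
    by apply: ler_wpM2l => //; apply: ler_wpM2l.
  by apply: ler_wpM2l.
apply: le_trans (lerD (lerD (lerD (lerD a12 a23) a34) a45) a56) _.
rewrite le_eqVlt; apply/orP; left; apply/eqP; ring.
Qed.

Lemma final_ge0 {R : realType} (nh nh2 nf1 nf2 nf22 nF nr L dl : R) :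
  0 <= nh -> 0 <= nh2 -> 0 <= nf1 -> 0 <= nf2 -> 0 <= nf22 -> 0 <= nF ->
  0 <= nr -> 0 <= L -> 0 <= dl ->
  0 <= L * (nh + nh2 * nf2) * nF + L ^+ 2 * (nh2 * nf2 ^+ 2 + nh * nf22) * nr
   + L ^+ 2 * nh * nf1 * (1 + L * dl) * nr.
Proof.
move=> ? ? ? ? ? ? ? ? ?.
have ? : 0 <= L ^+ 2 by exact: exprn_ge0.
have ? : 0 <= nf2 ^+ 2 by exact: exprn_ge0.
have ? : 0 <= nh2 * nf2 by exact: mulr_ge0.
have ? : 0 <= nh2 * nf2 ^+ 2 by exact: mulr_ge0.
have ? : 0 <= nh * nf22 by exact: mulr_ge0.
have ? : 0 <= L * dl by exact: mulr_ge0.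
have ? : 0 <= 1 + L * dl by apply: addr_ge0.
have ? : 0 <= nh + nh2 * nf2 by apply: addr_ge0.
have ? : 0 <= nh2 * nf2 ^+ 2 + nh * nf22 by apply: addr_ge0.
apply: addr_ge0; first apply: addr_ge0.
- by apply: mulr_ge0 => //; apply: mulr_ge0.
- by apply: mulr_ge0 => //; apply: mulr_ge0.
- apply: mulr_ge0 => //; apply: mulr_ge0 => //; apply: mulr_ge0 => //.
  exact: mulr_ge0.
Qed.


Theorem lemma3p7 (R : realType) (Xc X Y : completeNormedModType R)
  (A : {linear Xc -> Xc}) (Ainv : Xc -> Xc)
  (Lg Lc : R)
  (r rt : Xc -> Xc) (g1 g2 : Xc -> Xc)
  (h : Y -> X) (f1 f2 : Xc -> Y) :
  continuous A -> continuous Ainv ->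
  cancel A Ainv -> cancel Ainv A ->
  0 <= Lg -> 0 <= Lc -> Lc < 1 ->
  let Lr := (Lg + Lc * (2 * opn A + Lg)) / (1 - Lc) in
  let Lt := opn Ainv ^+ 2 * Lr / (1 - opn Ainv * Lr) in
  let Lm1 := opn Ainv + Lt in
  Lr * opn Ainv < 1 ->
  C2b r -> C2b rt -> nD r <= Lr -> nD rt <= Lr ->
  (* g1 = (A + r)^{-1}, g2 = (A + rt)^{-1} *)
  cancel (fun x => A x + r x) g1 -> cancel g1 (fun x => A x + r x) ->
  cancel (fun x => A x + rt x) g2 -> cancel g2 (fun x => A x + rt x) ->
  C2b h -> C2b f1 -> C2b f2 ->
  let F1 := h \o f1 \o g1 in
  let F2 := h \o f2 \o g2 in
  supn (F1 \- F2)
    <= nD h * (supn (f1 \- f2) + Lm1 * nD f2 * supn (r \- rt))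
  /\
  (forall delta : R, 0 < delta -> nD2 rt <= delta ->
     sup (range (fun x => opn (fun u => D1 F1 x u - D1 F2 x u)))
     <= Lm1 * (nD h + nD2 h * nD f2) * n1 (f1 \- f2)
        + Lm1 ^+ 2 * (nD2 h * nD f2 ^+ 2 + nD h * nD2 f2) * n1 (r \- rt)
        + Lm1 ^+ 2 * nD h * nD f1 * (1 + Lm1 * delta) * n1 (r \- rt)).
Proof.
move=> cA cAi AK KA Lg0 Lc0 Lc1 Lr Lt Lm1 hLr rC rtC rL rtL g1K K1 g2K K2 hC f1C f2C F1 F2.
have Alin : linear Ainv.
  by move=> c u v; apply: (can_inj AK); rewrite KA linearP !KA.
have Ab : bnd Ainv (opn Ainv).
  apply: opn_bnd; first exact: (linZ _ Alin).
  have [k _ Hk] := @linear_lipschitz _ _ _ (mklin Ainv Alin) cAi.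
  by exists k.
have a0 : 0 <= opn Ainv := opn_ge0 Ainv.
have Lr0 : 0 <= Lr.
  rewrite /Lr; apply: divr_ge0; last by rewrite subr_ge0 ltW.
  apply: addr_ge0 => //; apply: mulr_ge0 => //; apply: addr_ge0 => //.
  by apply: mulr_ge0 => //; exact: opn_ge0.
clearbody Lr.
have aLr : opn Ainv * Lr < 1 by rewrite mulrC.
have LmE : Lm1 = Lmf (opn Ainv) Lr.
  rewrite /Lm1 /Lt /Lmf; field.
  by rewrite subr_eq0 eq_sym lt_eqF.
clearbody Lm1; subst Lm1.
set L := Lmf (opn Ainv) Lr.
have L0 : 0 <= L := Lm_ge0 _ _ a0 aLr.
have G1 := g_diff A Ainv (opn Ainv) Lr r g1 AK KA Alin Ab a0 Lr0 aLr rC rL K1.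
have G2 := g_diff A Ainv (opn Ainv) Lr rt g2 AK KA Alin Ab a0 Lr0 aLr rtC rtL K2.
have Yd := ydiff A Ainv (opn Ainv) Lr r rt g1 g2 AK Ab a0 aLr rC rtC rL K1 K2.
split.
  apply: sup_le; first by exists (`|(F1 \- F2) 0|), 0.
  move=> _ [x _ <-] /=; rewrite /F1 /F2 /=.
  apply: le_trans (C2b_lip h hC _ _) _.
  apply: ler_wpM2l; first exact: nD_ge0.
  apply: le_trans (ler_distD (f2 (g1 x)) _ _) _.
  apply: lerD; first exact: (sub_sup _ _ f1C f2C).
  apply: le_trans (C2b_lip f2 f2C _ _) _.
  rewrite [L * _]mulrC -mulrA; apply: ler_wpM2l; first exact: nD_ge0.
  exact: Yd.
move=> delta d0 hdelta.
have dl0 : 0 <= delta := ltW d0.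
have nr0 : 0 <= n1 (r \- rt) := le_trans (nD_ge0 _) (nD_n1 r rt).
have nF0 : 0 <= n1 (f1 \- f2) := le_trans (nD_ge0 _) (nD_n1 f1 f2).
have nh0 := nD_ge0 h; have nh20 := nD2_ge0 h; have nf10 := nD_ge0 f1.
have nf20 := nD_ge0 f2; have nf220 := nD2_ge0 f2.
apply: sup_le; first by eexists; exists 0.
move=> _ [x _ <-] /=.
apply: opn_le.
  exact: final_ge0.
move=> u.
have [dg1 [bg1 T1 S1]] := G1 x.
have [dg2 [bg2 T2 S2]] := G2 x.
have E1 : D1 F1 x u = 'd h (f1 (g1 x)) ('d f1 (g1 x) ('d g1 x u)).
  by rewrite /D1 /F1 dcomp3 //; [exact: (C2b_diff _ f1C) | exact: (C2b_diff _ hC)].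
have E2 : D1 F2 x u = 'd h (f2 (g2 x)) ('d f2 (g2 x) ('d g2 x u)).
  by rewrite /D1 /F2 dcomp3 //; [exact: (C2b_diff _ f2C) | exact: (C2b_diff _ hC)].
rewrite E1 E2.
set y1 := g1 x; set y2 := g2 x.
set v1 := 'd g1 x u; set v2 := 'd g2 x u.
have hv1 : `|v1| <= L * `|u| := bg1 u.
have hv2 : `|v2| <= L * `|u| := bg2 u.
have hy : `|y1 - y2| <= L * n1 (r \- rt).
  by apply: le_trans (Yd x) _; exact: (ler_wpM2l L0 (supn_n1 r rt)).
have hdv : `|v1 - v2| <= L ^+ 2 * (1 + L * delta) * n1 (r \- rt) * `|u|.
  have ev : v1 - v2 = 'd g2 x ('d rt y2 v1 - 'd r y1 v1).
    have e1 : v1 = 'd g2 x (Tf A rt y2 v1) by rewrite S2.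
    have e2 : v2 = 'd g2 x (Tf A r y1 v1) by rewrite T1.
    by rewrite {1}e1 {1}e2 -linearB /Tf zmod_id5.
  rewrite ev; apply: le_trans (bg2 _) _.
  have k1 : `|'d rt y2 v1 - 'd rt y1 v1| <= delta * (L * n1 (r \- rt)) * (L * `|u|).
    apply: le_trans (C2b_Dlip rt rtC y1 y2 v1) _.
    apply: ler_pM => //.
    - by apply: mulr_ge0 => //; exact: nD2_ge0.
    - by apply: ler_pM => //; [exact: nD2_ge0 | rewrite distrC].
  have k2 : `|'d rt y1 v1 - 'd r y1 v1| <= n1 (r \- rt) * (L * `|u|).
    rewrite distrC -(sub_dE r rt rC rtC).
    apply: le_trans (sub_D r rt rC rtC y1 v1) _.
    exact: (ler_wpM2l nr0 hv1).
  apply: le_trans (ler_wpM2l L0 (le_trans (ler_distD ('d rt y1 v1) _ _) (lerD k1 k2))) _.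
  by rewrite le_eqVlt; apply/orP; left; apply/eqP; ring.
apply: le_trans (dist5 _ ('d h (f1 y1) ('d f1 y1 v2)) ('d h (f1 y1) ('d f2 y1 v2))
   ('d h (f2 y1) ('d f2 y1 v2)) ('d h (f2 y1) ('d f2 y2 v2)) _) _.
apply: (@final_num R (nD h) (nD2 h) (nD f1) (nD f2) (nD2 f2) (n1 (f1 \- f2))
   (n1 (r \- rt)) L delta (`|u|) _ _ _ _ _ (`|v1 - v2|) (`|v2|) (`|y1 - y2|)
   (`|f1 y1 - f2 y1|)) => //.
- exact: le_trans (sub_sup f1 f2 f1C f2C y1) (supn_n1 f1 f2).
- rewrite -!linearB.
  apply: le_trans (C2b_D h hC _ _) _.
  exact: (ler_wpM2l nh0 (C2b_D f1 f1C _ _)).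
- rewrite -linearB -(sub_dE f1 f2 f1C f2C).
  apply: le_trans (C2b_D h hC _ _) _.
  exact: (ler_wpM2l nh0 (sub_D f1 f2 f1C f2C _ _)).
- apply: le_trans (C2b_Dlip h hC (f2 y1) (f1 y1) _) _.
  apply: ler_wpM2l; first by apply: mulr_ge0.
  exact: C2b_D.
- rewrite -linearB.
  apply: le_trans (C2b_D h hC _ _) _.
  exact: (ler_wpM2l nh0 (C2b_Dlip f2 f2C y2 y1 v2)).
- apply: le_trans (C2b_Dlip h hC (f2 y2) (f2 y1) _) _.
  apply: ler_pM => //; first by apply: mulr_ge0.
    exact: (ler_wpM2l nh20 (C2b_lip f2 f2C y2 y1)).
  exact: C2b_D.
Qed.
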